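(* Let $0<\beta<1$. There exist a strictly positive function $\eta:\mathbb{N}_0\to(0,\infty)$ and a nonnegative strictly increasing function $t^*:[0,\infty)\to[0,\infty)$ with $t^*(v)=0$ iff $v=0$, both depending only on $\beta$, such that: if $u$ is a solution of $\partial_tu=\Delta(u^\beta)$ on $[0,\infty)\times\mathbb{Z}$ with initial data $0\le u_0\le1$, then $$u(t,k)\ge\eta(|k-l|)\,(t-s)^{\frac1{1-\beta}}$$ for all $k,l\in\mathbb{Z}$ and all $s\ge0$, $t$ with $0\le t-s\le t^*(u(s,l))$.
   Context: $\Delta v(k)=v(k-1)-2v(k)+v(k+1)$. A solution: $u\in C^0([0,\infty);\ell^\infty_+(\mathbb{Z}))$ with $u(0)=u_0$, each $u(\cdot,k)\in C^1((0,\infty))$ satisfying $\frac{d}{dt}u(t,k)=\Delta(u^\beta)(t,k)$ for all $t>0$. *)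

(* Defs.v *)
From Stdlib Require Import Reals ZArith.
From Coquelicot Require Import Coquelicot.
Open Scope R_scope.

(* x^b for x >= 0 (with 0^b = 0, for b > 0); Stdlib's Rpower is only meaningful on x > 0 *)
Definition rpow (b x : R) : R := if Rlt_dec 0 x then Rpower x b else 0.

Definition dlap (v : Z -> R) (k : Z) : R :=
  v (k - 1)%Z - 2 * v k + v (k + 1)%Z.

Definition linf_plus (v : Z -> R) : Prop :=
  (forall k, 0 <= v k) /\ exists M, forall k, Rabs (v k) <= M.

Definition is_solution (beta : R) (u0 : Z -> R) (u : R -> Z -> R) : Prop :=
  (forall t, 0 <= t -> linf_plus (u t)) /\
  (forall t0, 0 <= t0 -> forall eps, 0 < eps -> exists delta, 0 < delta /\
     forall t, 0 <= t -> Rabs (t - t0) < delta ->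
       forall k, Rabs (u t k - u t0 k) <= eps) /\
  (forall k, u 0 k = u0 k) /\
  (forall k t, 0 < t ->
     is_derive (fun tau => u tau k) t (dlap (fun j => rpow beta (u t j)) k)) /\
  (forall k t, 0 < t ->
     continuous (fun tau => dlap (fun j => rpow beta (u tau j)) k) t).

(* Main.v *)
Require Import Defs.
From Stdlib Require Import Reals ZArith Lra Lia.
From Coquelicot Require Import Coquelicot.
Open Scope R_scope.

Lemma cont_eps f x : continuity_pt f x -> forall eps, 0 < eps ->
  exists d, 0 < d /\ forall y, Rabs (y - x) < d -> Rabs (f y - f x) < eps.
Proof.
  intros H eps He. destruct (H eps He) as [d [Hd H']]. exists d; split; auto.
  intros y Hy. destruct (Req_dec y x) as [->|Hne].
  - rewrite Rminus_eq_0, Rabs_R0; auto.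
  - apply H'. split; [split; [exact I| auto] | simpl; unfold R_dist; auto].
Qed.

Lemma der_cont f x l : is_derive f x l -> continuity_pt f x.
Proof.
  intros H. apply continuity_pt_filterlim. apply (@ex_derive_continuous R_AbsRing R_NormedModule). exists l; auto.
Qed.

Lemma cmp (v w dv dw : R -> R) (s T : R) :
  s <= T ->
  (forall t, s < t <= T -> is_derive v t (dv t)) ->
  (forall t, s < t <= T -> is_derive w t (dw t)) ->
  (forall eps, 0 < eps -> exists del, 0 < del /\ forall t, s <= t < s + del ->
       Rabs (v t - v s) < eps /\ Rabs (w t - w s) < eps) ->
  w s <= v s ->
  (forall t, s < t <= T -> v t < w t -> dw t < dv t) ->
  w T <= v T.
Proof.
  intros HsT Hv Hw Hrc H0 Hpos.
  set (h := fun t => v t - w t).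
  assert (Hd : forall t, s < t <= T -> is_derive h t (dv t - dw t)).
  { intros t Ht. unfold h. apply (is_derive_minus v w); auto. }
  assert (Hc : forall t, s < t <= T -> continuity_pt h t).
  { intros t Ht. apply (der_cont _ _ _ (Hd t Ht)). }
  destruct (Rle_lt_dec (w T) (v T)) as [|HT]; auto. exfalso.
  assert (hT : h T < 0) by (unfold h; lra).
  assert (hs : 0 <= h s) by (unfold h; lra).
  set (E := fun t => s <= t <= T /\ 0 <= h t).
  destruct (completeness E) as [t0 [Hub Hlub]].
  { exists T. intros x [Hx _]. lra. }
  { exists s. split; [lra|auto]. }
  assert (Hst0 : s <= t0) by (apply Hub; split; [lra|auto]).
  assert (Ht0T : t0 <= T) by (apply Hlub; intros x [Hx _]; lra).
  assert (A : 0 <= h t0).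
  { destruct (Rle_lt_dec 0 (h t0)) as [|Hn]; auto. exfalso.
    destruct (Req_dec t0 s) as [->|Hne]; [lra|].
    destruct (cont_eps _ _ (Hc t0 ltac:(lra)) (- h t0) ltac:(lra)) as [d [Hd0 Hd1]].
    assert (t0 <= t0 - d/2); [|lra].
    apply Hlub. intros x [Hx1 Hx2].
    destruct (Rle_lt_dec x (t0 - d/2)) as [|Hx]; auto.
    assert (x <= t0) by (apply Hub; split; auto).
    assert (Rabs (x - t0) < d) by (apply Rabs_def1; lra).
    specialize (Hd1 x H1). apply Rabs_def2 in Hd1. lra. }
  assert (B : t0 < T) by (destruct (Req_dec t0 T) as [->|]; lra).
  assert (C : forall x, t0 < x <= T -> h x < 0).
  { intros x Hx. destruct (Rlt_le_dec (h x) 0) as [|Hx2]; auto.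
    assert (x <= t0) by (apply Hub; split; [lra|auto]). lra. }
  assert (D : exists t1, t0 < t1 < T /\ h T < h t1).
  { set (eps := h t0 - h T).
    assert (Heps : 0 < eps) by (unfold eps; lra).
    assert (exists d, 0 < d /\ forall y, t0 <= y < t0 + d -> Rabs (h y - h t0) < eps) as [d [Hd0 Hd1]].
    { destruct (Req_dec t0 s) as [->|Hne].
      - destruct (Hrc (eps/2) ltac:(lra)) as [d [Hd0 Hd1]]. exists d; split; auto.
        intros y Hy. destruct (Hd1 y Hy) as [Ha Hb]. unfold h.
        apply Rabs_def2 in Ha. apply Rabs_def2 in Hb. apply Rabs_def1; lra.
      - destruct (cont_eps _ _ (Hc t0 ltac:(lra)) eps Heps) as [d [Hd0 Hd1]].
        exists d; split; auto. intros y Hy. apply Hd1. apply Rabs_def1; lra. }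
    exists (t0 + Rmin d (T - t0) / 2).
    assert (0 < Rmin d (T - t0)) by (apply Rmin_pos; lra).
    assert (Rmin d (T - t0) <= d) by apply Rmin_l.
    assert (Rmin d (T - t0) <= T - t0) by apply Rmin_r.
    split; [lra|].
    specialize (Hd1 (t0 + Rmin d (T - t0) / 2) ltac:(lra)).
    apply Rabs_def2 in Hd1. unfold eps in Hd1. lra. }
  destruct D as [t1 [Ht1 Hh1]].
  destruct (MVT_gen h t1 T (fun x => dv x - dw x)) as [c [Hc1 Hc2]].
  { rewrite Rmin_left, Rmax_right by lra. intros x Hx. apply Hd. lra. }
  { rewrite Rmin_left, Rmax_right by lra. intros x Hx. apply Hc. lra. }
  rewrite Rmin_left, Rmax_right in Hc1 by lra.
  assert (hc : h c < 0) by (apply C; lra).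
  assert (0 < dv c - dw c).
  { assert (dw c < dv c); [|lra]. apply Hpos; [lra|]. unfold h in hc; lra. }
  assert (0 < (dv c - dw c) * (T - t1)) by (apply Rmult_lt_0_compat; lra).
  lra.
Qed.

Lemma Rpower_pos x y : 0 < Rpower x y.
Proof. unfold Rpower; apply exp_pos. Qed.

Lemma rpow_pos_eq b x : 0 < x -> rpow b x = Rpower x b.
Proof. intros H; unfold rpow; destruct (Rlt_dec 0 x); [auto|lra]. Qed.

Lemma rpow_0 b : rpow b 0 = 0.
Proof. unfold rpow; destruct (Rlt_dec 0 0); [lra|auto]. Qed.

Lemma rpow_ge0 b x : 0 <= rpow b x.
Proof. unfold rpow; destruct (Rlt_dec 0 x); [left; apply Rpower_pos|lra]. Qed.

Lemma rpow_le c a b : 0 <= c -> 0 <= a <= b -> rpow c a <= rpow c b.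
Proof.
  intros Hc [Ha Hb]. destruct (Req_dec a 0) as [->|Hne].
  - rewrite rpow_0; apply rpow_ge0.
  - rewrite !rpow_pos_eq by lra. apply Rle_Rpower_l; lra.
Qed.

Lemma Rpower_base1 x : Rpower 1 x = 1.
Proof. unfold Rpower; rewrite ln_1, Rmult_0_r; apply exp_0. Qed.

Lemma exp_le' x y : x <= y -> exp x <= exp y.
Proof. intros [H| ->]; [left; apply exp_increasing; auto| lra]. Qed.

Lemma Rpower_le_exp x a b : 0 < x <= 1 -> a <= b -> Rpower x b <= Rpower x a.
Proof.
  intros Hx Hab. unfold Rpower. apply exp_le'.
  assert (ln x <= 0) by (rewrite <- ln_1; apply ln_le; lra). nra.
Qed.

Lemma rpow_small p t : 1 <= p -> 0 <= t <= 1 -> rpow p t <= t.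
Proof.
  intros Hp Ht. destruct (Req_dec t 0) as [->|Hne]; [rewrite rpow_0; lra|].
  rewrite rpow_pos_eq by lra.
  rewrite <- (Rpower_1 t) at 2 by lra. apply Rpower_le_exp; lra.
Qed.

Lemma dlap_lb (f : Z -> R) k k' : (forall j, 0 <= f j) -> (k' = (k - 1)%Z \/ k' = (k + 1)%Z) ->
  f k' - 2 * f k <= dlap f k.
Proof.
  intros Hf [->| ->]; unfold dlap; [specialize (Hf (k+1)%Z) | specialize (Hf (k-1)%Z)]; lra.
Qed.

Lemma der_w (p s t c : R) : s < t ->
  is_derive (fun x => c * rpow p (x - s)) t (c * (p * Rpower (t - s) (p - 1))).
Proof.
  intros Hst. apply is_derive_scal.
  apply (is_derive_ext_loc (fun x => Rpower (x - s) p)).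
  { apply (locally_interval _ t s p_infty); simpl; auto.
    intros y Hy _. rewrite rpow_pos_eq by lra. auto. }
  assert (H := is_derive_comp (fun y => Rpower y p) (fun x => x - s) t (p * Rpower (t - s) (p - 1)) 1).
  replace (p * Rpower (t - s) (p - 1)) with (scal 1 (p * Rpower (t - s) (p - 1))).
  2:{ unfold scal; simpl; unfold mult; simpl; ring. }
  apply H.
  - apply is_derive_Reals. apply derivable_pt_lim_power. lra.
  - auto_derive; auto; ring.
Qed.

Fixpoint etas (b p : R) (n : nat) : R :=
  match n with O => 1/2 | S m => Rpower (Rpower (etas b p m) b / (3 + p)) (1 / b) end.

Lemma etas_pos b p n : 0 < etas b p n.
Proof. destruct n; simpl; [lra | apply Rpower_pos]. Qed.

Lemma etas_le1 b p n : 0 < b -> 0 < p -> etas b p n <= 1.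
Proof.
  intros Hb Hp. induction n as [|n IH]; simpl; [lra|].
  assert (H0 := etas_pos b p n).
  assert (H1 : Rpower (etas b p n) b <= 1).
  { apply Rle_trans with (Rpower 1 b); [| rewrite Rpower_base1; lra]. apply Rle_Rpower_l; lra. }
  assert (H2 := Rpower_pos (etas b p n) b).
  apply Rle_trans with (Rpower 1 (1/b)); [| rewrite Rpower_base1; lra]. apply Rle_Rpower_l.
  - left; apply Rdiv_lt_0_compat; lra.
  - split; [apply Rdiv_lt_0_compat; lra|].
    apply Rmult_le_reg_r with (3 + p); [lra|]. unfold Rdiv; rewrite Rmult_assoc, Rinv_l by lra. lra.
Qed.

Lemma etas_pow b p n : 0 < b -> 0 < p ->
  Rpower (etas b p (S n)) b = Rpower (etas b p n) b / (3 + p).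
Proof.
  intros Hb Hp. simpl. rewrite Rpower_mult. replace (1 / b * b) with 1 by (field; lra).
  apply Rpower_1. apply Rdiv_lt_0_compat; [apply Rpower_pos|lra].
Qed.

Lemma etas_key b p n : 0 < b < 1 -> 0 < p ->
  2 * Rpower (etas b p (S n)) b + p * etas b p (S n) < Rpower (etas b p n) b.
Proof.
  intros Hb Hp.
  assert (H1 : etas b p (S n) <= Rpower (etas b p (S n)) b).
  { rewrite <- (Rpower_1 (etas b p (S n))) at 1 by apply etas_pos.
    apply Rpower_le_exp; [split; [apply etas_pos| apply etas_le1; lra]| lra]. }
  rewrite etas_pow in * by lra.
  assert (H2 := Rpower_pos (etas b p n) b).
  set (A := Rpower (etas b p n) b) in *.
  assert (2 * (A / (3 + p)) + p * (A / (3+p)) < A); [|nra].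
  replace (2 * (A / (3 + p)) + p * (A / (3+p))) with (A * ((2 + p) / (3 + p))) by (field; lra).
  rewrite <- (Rmult_1_r A) at 2. apply Rmult_lt_compat_l; auto.
  apply Rmult_lt_reg_r with (3+p); [lra|]. unfold Rdiv; rewrite Rmult_assoc, Rinv_l by lra. lra.
Qed.

Lemma pow_prod c t p b : 0 < c -> 0 < t ->
  rpow b (c * rpow p t) = Rpower c b * Rpower t (p * b).
Proof.
  intros Hc Ht. rewrite (rpow_pos_eq p t) by auto.
  assert (0 < Rpower t p) by apply Rpower_pos.
  rewrite rpow_pos_eq by (apply Rmult_lt_0_compat; auto).
  rewrite <- Rpower_mult_distr by auto. rewrite Rpower_mult. auto.
Qed.

Lemma neighbor k l m : Z.abs_nat (k - l) = S m ->
  exists k', Z.abs_nat (k' - l) = m /\ (k' = (k - 1)%Z \/ k' = (k + 1)%Z).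
Proof. intros H. destruct (Z_lt_le_dec l k); [exists (k-1)%Z | exists (k+1)%Z]; lia. Qed.

Lemma propagate beta u0 u s l : 0 < beta -> beta < 1 -> is_solution beta u0 u -> 0 <= s ->
  forall n k, Z.abs_nat (k - l) = n -> forall t, s <= t <= s + rpow (1 - beta) (u s l) / 6 ->
  etas beta (1 / (1 - beta)) n * rpow (1 / (1 - beta)) (t - s) <= u t k.
Proof.
  intros hb0 hb1 Hsol Hs.
  destruct Hsol as [Hlin [Hcont [_ [Hder _]]]].
  set (p := 1 / (1 - beta)).
  assert (Hp : 1 < p).
  { unfold p. apply Rmult_lt_reg_r with (1 - beta); [lra|].
    replace (1 / (1 - beta) * (1 - beta)) with 1 by (field; lra). lra. }
  assert (Hpb : p * beta = p - 1) by (unfold p; field; lra).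
  assert (Hnn : forall t k, 0 <= t -> 0 <= u t k) by (intros t k Ht; apply (proj1 (Hlin t Ht))).
  assert (Hrc : forall k eps, 0 < eps -> exists del, 0 < del /\ forall t, s <= t < s + del ->
            Rabs (u t k - u s k) < eps).
  { intros k eps He. destruct (Hcont s Hs (eps/2) ltac:(lra)) as [d [Hd Hd']].
    exists d; split; auto. intros t Ht. assert (Rabs (t - s) < d) by (apply Rabs_def1; lra).
    specialize (Hd' t ltac:(lra) H k). lra. }
  set (V := u s l). set (T := rpow (1 - beta) V / 6).
  intros n. induction n as [|m IH]; intros k Hk t Ht.
  - assert (k = l) by lia. subst k.
    destruct (Req_dec t s) as [->|Hts].
    { rewrite Rminus_eq_0, rpow_0, Rmult_0_r. apply Hnn; lra. }
    assert (HV : 0 < V).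
    { destruct (Hnn s l Hs) as [|HV0]; auto. fold V in HV0.
      unfold T in Ht. rewrite <- HV0, rpow_0 in Ht. lra. }
    assert (HVb : 0 < rpow beta V) by (rewrite rpow_pos_eq by auto; apply Rpower_pos).
    assert (Hc := cmp (fun x => u x l) (fun x => V - 3 * rpow beta V * (x - s))
              (fun x => dlap (fun j => rpow beta (u x j)) l) (fun _ => - (3 * rpow beta V)) s t).
    simpl in Hc.
    assert (Hlow : V - 3 * rpow beta V * (t - s) <= u t l).
    { apply Hc.
      - lra.
      - intros x Hx. apply Hder. lra.
      - intros x Hx. auto_derive; auto; ring.
      - intros eps He. destruct (Hrc l eps He) as [d [Hd Hd']].
        exists (Rmin d (eps / (3 * rpow beta V + 1))). split.
        { apply Rmin_pos; auto. apply Rdiv_lt_0_compat; lra. }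
        intros x Hx. assert (Rmin d (eps / (3 * rpow beta V + 1)) <= d) by apply Rmin_l.
        assert (H2 : Rmin d (eps / (3 * rpow beta V + 1)) <= eps / (3 * rpow beta V + 1)) by apply Rmin_r.
        split; [apply Hd'; lra|].
        replace (V - 3 * rpow beta V * (x - s) - (V - 3 * rpow beta V * (s - s)))
          with (- (3 * rpow beta V * (x - s))) by ring.
        rewrite Rabs_Ropp, Rabs_pos_eq by nra.
        assert (H3 : (3 * rpow beta V + 1) * (eps / (3 * rpow beta V + 1)) = eps) by (field; lra).
        nra.
      - unfold V; lra.
      - intros x Hx Hlt.
        assert (H0 := Hnn x l ltac:(lra)).
        assert (H1 : rpow beta (u x l) <= rpow beta V) by (apply rpow_le; nra).
        assert (H2 := dlap_lb (fun j => rpow beta (u x j)) l (l - 1)%Z (fun j => rpow_ge0 _ _) (or_introl eq_refl)).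
        simpl in H2. assert (H3 := rpow_ge0 beta (u x (l - 1)%Z)). lra. }
    assert (Htau : 0 < t - s) by lra.
    assert (HVV : rpow beta V * rpow (1 - beta) V = V).
    { rewrite !rpow_pos_eq by auto. rewrite <- Rpower_plus.
      replace (beta + (1 - beta)) with 1 by ring. apply Rpower_1; auto. }
    assert (HR : rpow p (t - s) <= V).
    { rewrite rpow_pos_eq by auto.
      assert (0 < Rpower V (1 - beta)) by apply Rpower_pos.
      unfold T in Ht. rewrite rpow_pos_eq in Ht by auto.
      apply Rle_trans with (Rpower (Rpower V (1 - beta)) p).
      - apply Rle_Rpower_l; lra.
      - rewrite Rpower_mult. replace ((1 - beta) * p) with 1 by (unfold p; field; lra).
        rewrite Rpower_1; lra. }
    simpl.
    assert (3 * rpow beta V * (t - s) <= V / 2).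
    { unfold T in Ht. assert (t - s <= rpow (1 - beta) V / 6) by lra. nra. }
    lra.
  - destruct (neighbor k l m Hk) as [k' [Hk' Hnb]].
    destruct (Req_dec t s) as [->|Hts].
    { rewrite Rminus_eq_0, rpow_0, Rmult_0_r. apply Hnn; lra. }
    set (e' := etas beta p (S m)).
    assert (He' : 0 < e') by apply etas_pos.
    assert (Hc := cmp (fun x => u x k) (fun x => e' * rpow p (x - s))
              (fun x => dlap (fun j => rpow beta (u x j)) k)
              (fun x => e' * (p * Rpower (x - s) (p - 1))) s t).
    simpl in Hc. apply Hc.
    + lra.
    + intros x Hx. apply Hder. lra.
    + intros x Hx. apply der_w. lra.
    + intros eps He. destruct (Hrc k eps He) as [d [Hd Hd']].
      exists (Rmin 1 (Rmin d (eps / (e' + 1)))). split.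
      { apply Rmin_pos; [lra|]. apply Rmin_pos; auto. apply Rdiv_lt_0_compat; lra. }
      intros x Hx. 
      assert (Rmin 1 (Rmin d (eps / (e' + 1))) <= 1) by apply Rmin_l.
      assert (Rmin 1 (Rmin d (eps / (e' + 1))) <= Rmin d (eps / (e' + 1))) by apply Rmin_r.
      assert (Rmin d (eps / (e' + 1)) <= d) by apply Rmin_l.
      assert (H2 : Rmin d (eps / (e' + 1)) <= eps / (e' + 1)) by apply Rmin_r.
      split; [apply Hd'; lra|].
      rewrite Rminus_eq_0, rpow_0, Rmult_0_r, Rminus_0_r.
      assert (H4 := rpow_ge0 p (x - s)).
      assert (H5 : rpow p (x - s) <= x - s) by (apply rpow_small; lra).
      rewrite Rabs_pos_eq by nra.
      assert (H3 : (e' + 1) * (eps / (e' + 1)) = eps) by (field; lra).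
      nra.
    + rewrite Rminus_eq_0, rpow_0, Rmult_0_r. apply Hnn; lra.
    + intros x Hx Hlt.
      assert (Hx0 : 0 < x - s) by lra.
      assert (IHx := IH k' Hk' x ltac:(lra)).
      assert (H0 := Hnn x k ltac:(lra)).
      assert (Hm := etas_pos beta p m).
      assert (H1 : rpow beta (u x k) <= Rpower e' beta * Rpower (x - s) (p - 1)).
      { rewrite <- Hpb, <- pow_prod by auto. apply rpow_le; lra. }
      assert (H2 : Rpower (etas beta p m) beta * Rpower (x - s) (p - 1) <= rpow beta (u x k')).
      { rewrite <- Hpb, <- pow_prod by auto. apply rpow_le; [lra|].
        split; auto. left; apply Rmult_lt_0_compat; auto. rewrite rpow_pos_eq by auto. apply Rpower_pos. }
      assert (H3 := dlap_lb (fun j => rpow beta (u x j)) k k' (fun j => rpow_ge0 _ _) Hnb).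
      simpl in H3.
      assert (Hkey := etas_key beta p m ltac:(lra) ltac:(lra)). fold e' in Hkey.
      assert (HX := Rpower_pos (x - s) (p - 1)).
      set (X := Rpower (x - s) (p - 1)) in *.
      assert (e' * (p * X) < (Rpower (etas beta p m) beta - 2 * Rpower e' beta) * X); [|nra].
      replace (e' * (p * X)) with ((p * e') * X) by ring.
      apply Rmult_lt_compat_r; auto. lra.
Qed.

Theorem lemmaA13 (beta : R) (hb0 : 0 < beta) (hb1 : beta < 1) :
  exists (eta : nat -> R) (tstar : R -> R),
    (forall n, 0 < eta n) /\
    (forall v, 0 <= v -> 0 <= tstar v) /\
    (forall v w, 0 <= v -> v < w -> tstar v < tstar w) /\
    (forall v, 0 <= v -> (tstar v = 0 <-> v = 0)) /\
    forall (u0 : Z -> R) (u : R -> Z -> R),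
      (forall k, 0 <= u0 k <= 1) ->
      is_solution beta u0 u ->
      forall (k l : Z) (s t : R), 0 <= s -> 0 <= t - s -> t - s <= tstar (u s l) ->
        eta (Z.abs_nat (k - l)) * rpow (1 / (1 - beta)) (t - s) <= u t k.
Proof.
  exists (etas beta (1 / (1 - beta))), (fun v => rpow (1 - beta) v / 6).
  split; [intros; apply etas_pos|].
  split; [intros v _; assert (H := rpow_ge0 (1 - beta) v); lra|].
  split.
  { intros v w Hv Hvw. destruct (Req_dec v 0) as [->|Hne].
    - rewrite rpow_0, rpow_pos_eq by lra. assert (H := Rpower_pos w (1 - beta)). lra.
    - rewrite !rpow_pos_eq by lra. assert (Rpower v (1 - beta) < Rpower w (1 - beta)); [|lra].
      apply Rlt_Rpower_l; lra. }
  split.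
  { intros v Hv. split.
    - intros H. destruct (Req_dec v 0) as [|Hne]; auto. rewrite rpow_pos_eq in H by lra.
      assert (H1 := Rpower_pos v (1 - beta)). lra.
    - intros ->. rewrite rpow_0. lra. }
  intros u0 u _ Hsol k l s t Hs Hts Ht.
  apply (propagate beta u0 u s l hb0 hb1 Hsol Hs _ k eq_refl). lra.
Qed.
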